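(* Let $d,N,L\in\mathbb{N}$ with $d+2<N$, and let $W^{(0)}\in\mathbb{R}^{N\times d}$, $W^{(\ell)}\in\mathbb{R}^{N\times N}$ ($1\le\ell\le L-1$) and $b^{(0)},\dots,b^{(L-1)}\in\mathbb{R}^N$ be fixed. Let $\mathscr{D}=\{(D^{(L-1)}(x),\dots,D^{(0)}(x)):x\in\mathbb{R}^d\}$. Then $|\mathscr{D}|\le\left(\frac{eN}{d+1}\right)^{L(d+1)}$.
   Context: For $v\in\mathbb{R}^N$, $\Delta(v)$ is the $N\times N$ diagonal matrix with diagonal entries $\mathbb{1}_{v_i>0}$. For $x\in\mathbb{R}^d$ set $x^{(0)}=x$ and recursively $D^{(\ell)}(x)=\Delta(W^{(\ell)}x^{(\ell)}+b^{(\ell)})$, $x^{(\ell+1)}=\mathrm{ReLU}(W^{(\ell)}x^{(\ell)}+b^{(\ell)})$ for $0\le\ell<L$, where $\mathrm{ReLU}(t)=\max\{0,t\}$ componentwise. *)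

(* Defs.v *)
From HB Require Import structures.
From mathcomp Require Import all_boot all_order all_algebra.
From mathcomp Require Import all_classical all_reals all_analysis.
Set Implicit Arguments. Unset Strict Implicit. Unset Printing Implicit Defensive.
Import Order.TTheory GRing.Theory Num.Theory.
Local Open Scope ring_scope.

Definition relu (R : realType) (n : nat) (v : 'cV[R]_n) : 'cV[R]_n :=
  map_mx (fun t => Num.max 0 t) v.

Definition Delta (R : realType) (n : nat) (v : 'cV[R]_n) : 'M[R]_n :=
  diag_mx (\row_i (if 0 < v i 0 then 1 else 0)).

(* Pre-activations z^(l) = W^(l) x^(l) + b^(l), with x^(0) = x and
   x^(l+1) = ReLU(z^(l)).  W0 is W^(0) (N x d); W l is W^(l) for l >= 1
   (W 0 is unused); b l is b^(l). *)
Fixpoint preact (R : realType) (d N : nat) (W0 : 'M[R]_(N, d))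
  (W : nat -> 'M[R]_N) (b : nat -> 'cV[R]_N) (x : 'cV[R]_d) (l : nat)
  : 'cV[R]_N :=
  match l with
  | 0 => W0 *m x + b 0%N
  | l'.+1 => W l *m relu (preact W0 W b x l') + b l
  end.

Definition pattern (R : realType) (d N L : nat) (W0 : 'M[R]_(N, d))
  (W : nat -> 'M[R]_N) (b : nat -> 'cV[R]_N) (x : 'cV[R]_d)
  : {ffun 'I_L -> 'M[R]_N} :=
  [ffun l : 'I_L => Delta (preact W0 W b x l)].

Definition patterns (R : realType) (d N L : nat) (W0 : 'M[R]_(N, d))
  (W : nat -> 'M[R]_N) (b : nat -> 'cV[R]_N) : set {ffun 'I_L -> 'M[R]_N} :=
  range (@pattern R d N L W0 W b).

(* Main.v *)
Require Import Defs.
From HB Require Import structures.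
From mathcomp Require Import all_boot all_order all_algebra.
From mathcomp Require Import all_classical all_reals all_analysis.
From mathcomp Require Import finmap.
Import Order.TTheory GRing.Theory Num.Theory.
Local Open Scope ring_scope.

Module Aux.
Import mathcomp.boot.fintype mathcomp.boot.finset.
Set Implicit Arguments. Unset Strict Implicit. Unset Printing Implicit Defensive.
Local Close Scope ring_scope.

Section Pajor.
Variable T : finType.
Implicit Types (F G : {set {set T}}) (A B S : {set T}).
Definition shatters F A : bool :=
  [forall B : {set T}, (B \subset A) ==> [exists S in F, S :&: A == B]].

Lemma shattersP F A : reflect (forall B, B \subset A -> exists2 S, S \in F & S :&: A = B) (shatters F A).
Proof.
apply: (iffP forallP) => [H B sBA | H B].
  move: (H B); rewrite sBA /= => /existsP [S /andP [SF /eqP E]]; by exists S.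
apply/implyP => sBA; have [S SF E] := H B sBA; apply/existsP; exists S; by rewrite SF E eqxx.
Qed.

Lemma shatter_noa F a A : (forall S, S \in F -> a \notin S) -> shatters F A -> a \notin A.
Proof.
move=> H /shattersP /(_ A (subxx A)) [S SF E]; apply/negP => aA.
have : a \in S :&: A by rewrite E.
by rewrite inE (negbTE (H S SF)).
Qed.

Lemma shatter_alla F a A : (forall S, S \in F -> a \in S) -> shatters F A -> a \notin A.
Proof.
move=> H /shattersP /(_ set0 (sub0set A)) [S SF E]; apply/negP => aA.
have : a \in S :&: A by rewrite inE H.
by rewrite E inE.
Qed.

Lemma shattersS F G A : F \subset G -> shatters F A -> shatters G A.
Proof.
move=> sFG /shattersP H; apply/shattersP => B sBA; have [S SF E] := H B sBA.
by exists S => //; apply: (subsetP sFG).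
Qed.

Lemma shatter_add F0 F1 a A : (forall S, S \in F0 -> a \notin S) ->
  (forall S, S \in F1 -> a \in S) -> shatters F0 A -> shatters F1 A ->
  shatters (F0 :|: F1) (a |: A).
Proof.
move=> H0 H1 sh0 sh1; have aA := shatter_noa H0 sh0.
move/shattersP: sh0 => sh0; move/shattersP: sh1 => sh1.
apply/shattersP => B sB.
case: (boolP (a \in B)) => aB.
  have sB' : B :\ a \subset A.
    apply/subsetP => y; rewrite !inE => /andP [ya yB].
    by move: (subsetP sB y yB); rewrite !inE (negbTE ya).
  have [S SF E] := sh1 _ sB'; exists S; first by rewrite inE SF orbT.
  apply/setP => y; rewrite !inE.
  case: (eqVneq y a) => [->|ya] /=; first by rewrite H1 // aB.
  by move/setP: E => /(_ y); rewrite !inE ya.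
have sB' : B \subset A.
  apply/subsetP => y yB; move: (subsetP sB y yB); rewrite !inE.
  by case: (eqVneq y a) => [ya|] //=; move: aB; rewrite -ya yB.
have [S SF E] := sh0 _ sB'; exists S; first by rewrite inE SF.
apply/setP => y; rewrite !inE.
case: (eqVneq y a) => [->|ya] /=; first by rewrite (negbTE (H0 S SF)) (negbTE aB).
by move/setP: E => /(_ y); rewrite !inE.
Qed.

Lemma pajor F : #|F| <= #|[set A | shatters F A]|.
Proof.
move: {2}#|F| (leqnn #|F|) => n; elim: n F => [|n IH] F hF.
  by move: hF; rewrite leqn0 => /eqP ->.
case: (leqP #|F| 1) => hF1.
  case: (leqP #|F| 0) => hF0; first by apply: leq_trans hF0 _.
  have [S SF] : exists S, S \in F by apply/set0Pn; rewrite -card_gt0.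
  apply: (leq_trans hF1); rewrite card_gt0; apply/set0Pn; exists set0; rewrite inE.
  apply/shattersP => B; rewrite subset0 => /eqP ->; by exists S; rewrite ?setI0.
have [S1 [S2 [S1F S2F S12]]] := card_gt1P hF1.
have [a Ha] : exists a, (a \in S1) != (a \in S2).
  case: (pickP (fun a => (a \in S1) != (a \in S2))) => [a Ha|H]; first by exists a.
  by case/eqP: S12; apply/setP => y; move/negbT: (H y) => /negPn /eqP.
pose Ba := [set S : {set T} | a \in S].
pose F1 := F :&: Ba; pose F0 := F :\: Ba.
have cF : #|F1| + #|F0| = #|F| by rewrite cardsID.
have [n0 n1] : F0 != set0 /\ F1 != set0.
  case: (boolP (a \in S1)) Ha => aS1 /= Ha.
    split; apply/set0Pn; [exists S2 | exists S1]; rewrite !inE ?aS1 ?S1F ?S2F //.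
    by rewrite andbT; move: Ha; case: (a \in S2).
  split; apply/set0Pn; [exists S1 | exists S2]; rewrite !inE ?aS1 ?S1F ?S2F //.
  by move: Ha; case: (a \in S2).
have h1 : #|F1| <= n.
  by rewrite -ltnS; apply: leq_trans hF; rewrite -cF -{1}(addn0 #|F1|) ltn_add2l card_gt0.
have h0 : #|F0| <= n.
  by rewrite -ltnS; apply: leq_trans hF; rewrite -cF -{1}(add0n #|F0|) ltn_add2r card_gt0.
have a0 : forall S, S \in F0 -> a \notin S by move=> S; rewrite !inE => /andP [].
have a1 : forall S, S \in F1 -> a \in S by move=> S; rewrite !inE => /andP [].
pose X := [set A | shatters F0 A]; pose Y := [set A | shatters F1 A].
pose Z := [set a |: A | A in X :&: Y].
have sXY : X :|: Y \subset [set A | shatters F A].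
  apply/subsetP => A; rewrite !inE => /orP [] sh; apply: shattersS sh.
    exact: subsetDl.
  exact: subsetIl.
have sZ : Z \subset [set A | shatters F A].
  apply/subsetP => A' /imsetP [A]; rewrite !inE => /andP [s0 s1] ->.
  have := shatter_add a0 a1 s0 s1; by rewrite setUC setID.
have dis : (X :|: Y) :&: Z = set0.
  apply/setP => A; rewrite !inE; apply/negP => /andP [/orP [] sh /imsetP [A' _ E]].
    by move: (shatter_noa a0 sh); rewrite E setU11.
  by move: (shatter_alla a1 sh); rewrite E setU11.
have cZ : #|Z| = #|X :&: Y|.
  apply: card_in_imset => A A'; rewrite !inE => /andP [s0 _] /andP [s0' _] E.
  by rewrite -(setU1K (shatter_noa a0 s0)) -(setU1K (shatter_noa a0 s0')) E.
rewrite -cF; apply: (@leq_trans (#|X| + #|Y|)).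
  by rewrite addnC leq_add // ?IH.
rewrite -cardsUI -cZ; apply: (@leq_trans #|(X :|: Y) :|: Z|).
  by have := cardsUI (X :|: Y) Z; rewrite dis cards0 addn0 => ->.
by apply: subset_leq_card; rewrite subUset sXY sZ.
Qed.
End Pajor.



Lemma card_small_sets (T : finType) k :
  (#|[set A : {set T} | (#|A| <= k)%N]| <= \sum_(i < k.+1) 'C(#|T|, i))%N.
Proof.
elim: k => [|k IH].
  rewrite big_ord1 -card_draws; apply: subset_leq_card; apply/subsetP => A; by rewrite !inE leqn0.
rewrite big_ord_recr /=; apply: (@leq_trans (#|[set A : {set T} | (#|A| <= k)%N]| + #|[set A : {set T} | #|A| == k.+1]|)).
  apply: leq_trans (leq_card_setU _ _); apply: subset_leq_card; apply/subsetP => A.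
  by rewrite !inE leq_eqVlt ltnS orbC.
by rewrite leq_add // card_draws.
Qed.

Local Open Scope ring_scope.
Section Sign.
Variables (R : realFieldType) (d N : nat) (M : 'M[R]_(N,d)) (c : 'cV[R]_N).
Definition sgset (x : 'cV[R]_d) : {set 'I_N} := [set i | 0 < (M *m x + c) i 0].

Lemma sign_contra (F : {set {set 'I_N}}) (T : {set 'I_N}) (lam : 'rV[R]_N) :
  (forall S, S \in F -> exists x, S = sgset x) -> shatters F T ->
  (forall i, i \notin T -> lam 0 i = 0) ->
  (forall x, \sum_i lam 0 i * (M *m x + c) i 0 = 0) ->
  (exists i, 0 < lam 0 i) -> False.
Proof.
move=> HF /shattersP sh lT lsum [i0 hi0].
have sB : [set i in T | 0 < lam 0 i] \subset T by apply/subsetP => i; rewrite inE => /andP [].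
have [S SF /setP E] := sh _ sB; have [x Sx] := HF S SF.
have i0T : i0 \in T by apply/negPn/negP => /lT; move: hi0 => /[swap] ->; rewrite ltxx.
have term : forall i, 0 <= lam 0 i * (M *m x + c) i 0.
  move=> i; case: (boolP (i \in T)) => iT; last by rewrite lT // mul0r.
  have := E i; rewrite !inE iT andbT /= Sx inE.
  case: (ltrP 0 (lam 0 i)) => hl /=.
    by move=> hz; rewrite mulr_ge0 // ?ltW // -hz.
  move=> /negbT; rewrite -leNgt => hz; by rewrite mulr_le0.
have : 0 < \sum_i lam 0 i * (M *m x + c) i 0.
  rewrite (bigD1 i0) //=; apply: (@lt_le_trans _ _ (lam 0 i0 * (M *m x + c) i0 0)); last first.
    by rewrite lerDl sumr_ge0.
  have := E i0; rewrite !inE i0T hi0 andbT /= Sx inE => h.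
  by rewrite mulr_gt0 // h.
by rewrite lsum ltxx.
Qed.


Lemma ker_nz m n (A : 'M[R]_(m, n)) : (n < m)%N -> exists mu : 'rV[R]_m, mu != 0 /\ mu *m A = 0.
Proof.
move=> hnm; pose K := kermx A.
have rK : (0 < \rank K)%N.
  rewrite /K mxrank_ker subn_gt0; apply: leq_ltn_trans hnm; exact: rank_leq_col.
have [t0 ht0] : exists t0, row t0 K != 0.
  case: (pickP (fun t => row t K != 0)) => [t Ht|H]; first by exists t.
  have K0 : K = 0 by apply/row_matrixP => i; rewrite row0; apply/eqP; move/negbT: (H i); rewrite negbK.
  by move: rK; rewrite K0 mxrank0.
exists (row t0 K); split => //; by rewrite -row_mul mulmx_ker row0.
Qed.

Lemma shatter_small (F : {set {set 'I_N}}) (T : {set 'I_N}) :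
  (forall S, S \in F -> exists x, S = sgset x) -> shatters F T -> (#|T| <= d.+1)%N.
Proof.
move=> HF sh; rewrite leqNgt; apply/negP => hT.
pose f := @enum_val _ (mem T).
pose P : 'M[R]_(#|T|, N) := \matrix_(t, i) (f t == i)%:R.
have [mu [mu0 hmu]] : exists mu : 'rV[R]_#|T|, mu != 0 /\ mu *m (P *m row_mx M c) = 0.
  by apply: ker_nz; rewrite addn1.
pose lam := mu *m P.
have lamf : forall t, lam 0 (f t) = mu 0 t.
  move=> t; rewrite !mxE (bigD1 t) //= big1 ?addr0; first by rewrite mxE eqxx mulr1.
  move=> t' ht'; rewrite mxE; case: eqP => [/enum_val_inj E|]; last by rewrite mulr0.
  by move: ht'; rewrite E eqxx.
have lamT : forall i, i \notin T -> lam 0 i = 0.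
  move=> i iT; rewrite !mxE big1 // => t _; rewrite mxE; case: eqP => [E|]; last by rewrite mulr0.
  by move: iT; rewrite -E enum_valP.
have lam0 : lam *m row_mx M c = 0 by rewrite -mulmxA.
move: lam0; rewrite mul_mx_row => /eqP; rewrite row_mx_eq0 => /andP [/eqP lM /eqP lc].
have lsum : forall (l : 'rV[R]_N), l *m M = 0 -> l *m c = 0 -> forall x, \sum_i l 0 i * (M *m x + c) i 0 = 0.
  move=> l h1 h2 x; have : (l *m (M *m x + c)) 0 0 = 0 by rewrite mulmxDr mulmxA h1 h2 mul0mx addr0 mxE.
  by rewrite mxE.
have [t0 ht0] : exists t0, mu 0 t0 != 0.
  case: (pickP (fun t => mu 0 t != 0)) => [t Ht|H]; first by exists t.
  move/eqP: mu0; case; apply/rowP => t.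
  by move/negbT: (H t); rewrite negbK mxE => /eqP.
clearbody lam.
case: (ltrP 0 (mu 0 t0)) => hpos.
  apply: (@sign_contra F T lam) => //; first exact: lsum.
  by exists (f t0); rewrite lamf.
apply: (@sign_contra F T (- lam)) => //.
- by move=> i /lamT; rewrite mxE => ->; rewrite oppr0.
- apply: lsum; by rewrite mulNmx ?lM ?lc oppr0.
- exists (f t0); rewrite mxE lamf oppr_gt0 lt_neqAle hpos andbT; exact: ht0.
Qed.


Lemma sign_count (F : {set {set 'I_N}}) :
  (forall S, S \in F -> exists x, S = sgset x) -> (#|F| <= \sum_(i < d.+2) 'C(N, i))%N.
Proof.
move=> HF; apply: (leq_trans (pajor F)).
apply: (@leq_trans #|[set A : {set 'I_N} | (#|A| <= d.+1)%N]|).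
  by apply: subset_leq_card; apply/subsetP => A; rewrite !inE => /(shatter_small HF).
by have := @card_small_sets 'I_N d.+1; rewrite card_ord.
Qed.

End Sign.


Lemma card_bigcup_le (I T : finType) (A : {set I}) (G : I -> {set T}) :
  (#|\bigcup_(i in A) G i| <= \sum_(i in A) #|G i|)%N.
Proof.
elim/big_rec2: _ => [|i n U _ H]; first by rewrite cards0. apply: leq_trans (leq_card_setU _ _) _; by rewrite leq_add.
Qed.

Section Net.
Variables (R : realType) (d N L : nat) (W0 : 'M[R]_(N,d)) (W : nat -> 'M[R]_N) (b : nat -> 'cV[R]_N).

Definition Sl (l : nat) (x : 'cV[R]_d) : {set 'I_N} := [set i | 0 < preact W0 W b x l i 0].
Definition Dm (S : {set 'I_N}) : 'M[R]_N := diag_mx (\row_i (if i \in S then 1 else 0)).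

Lemma relu_D (z : 'cV[R]_N) : relu z = Dm [set i | 0 < z i 0] *m z.
Proof.
apply/matrixP => i j; rewrite mul_diag_mx !mxE inE (ord1 j).
by case: ltrP => h /=; rewrite ?mul1r ?mul0r.
Qed.

Lemma affine k x0 : exists (M : 'M[R]_(N,d)) (c : 'cV[R]_N), forall x,
  (forall l, (l < k)%N -> Sl l x = Sl l x0) -> preact W0 W b x k = M *m x + c.
Proof.
elim: k => [|k [M [c IH]]]; first by exists W0, (b 0%N).
exists (W k.+1 *m Dm (Sl k x0) *m M), (W k.+1 *m (Dm (Sl k x0) *m c) + b k.+1).
move=> x H; rewrite /= relu_D.
have -> : [set i | 0 < preact W0 W b x k i 0] = Sl k x0 by rewrite -H.
rewrite IH; last by move=> l hl; apply: H; apply: ltnW.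
by rewrite !mulmxDr !mulmxA addrA.
Qed.


Definition sigp k x : {ffun 'I_L -> {set 'I_N}} :=
  [ffun l : 'I_L => if (l < k)%N then Sl l x else finset.set0].
Definition Aset k : {set {ffun 'I_L -> {set 'I_N}}} := [set s | `[< exists x, sigp k x = s >]].
Definition Bs := (\sum_(i < d.+2) 'C(N, i))%N.

Lemma sig_eq k x x0 : (k <= L)%N -> sigp k x = sigp k x0 -> forall l, (l < k)%N -> Sl l x = Sl l x0.
Proof.
move=> kL E l lk; have lL : (l < L)%N := leq_trans lk kL.
by move/ffunP: E => /(_ (Ordinal lL)); rewrite !ffunE /= lk.
Qed.

Lemma Tk_card k s : (k < L)%N ->
  (#|[set S | `[< exists x, sigp k x = s /\ Sl k x = S >]]| <= Bs)%N.
Proof.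
move=> kL.
case: (pselect (exists x0, sigp k x0 = s)) => [[x0 hx0]|nex]; last first.
  rewrite (_ : [set S | _] = finset.set0) ?cards0 //; apply/setP => S; rewrite !inE.
  by apply/negbTE/negP => /asboolP [x [hx _]]; apply: nex; exists x.
have [M [c Hc]] := affine k x0.
apply: (@sign_count _ d N M c) => S; rewrite inE => /asboolP [x [hx <-]]; exists x.
rewrite /Sl /sgset Hc //; apply: sig_eq (ltnW kL) _; by rewrite hx hx0.
Qed.

Lemma Aset_card k : (k <= L)%N -> (#|Aset k| <= Bs ^ k)%N.
Proof.
elim: k => [|k IH] hk.
  rewrite expn0; apply: (@leq_trans #|[set [ffun l : 'I_L => (finset.set0 : {set 'I_N})]]|); last by rewrite cards1.
  apply: subset_leq_card; apply/fintype.subsetP => s; rewrite /Aset !inE => /asboolP [x <-].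
  by apply/eqP/ffunP => l; rewrite !ffunE.
have kL : (k < L)%N := hk.
pose kk := Ordinal kL.
pose upd (s : {ffun 'I_L -> {set 'I_N}}) (S : {set 'I_N}) : {ffun 'I_L -> {set 'I_N}} :=
  [ffun l => if l == kk then S else s l].
pose Tk s := [set S | `[< exists x, sigp k x = s /\ Sl k x = S >]].
have sub : Aset k.+1 \subset \bigcup_(s in Aset k) [set upd s S | S in Tk s].
  apply/fintype.subsetP => s'; rewrite /Aset inE => /asboolP [x <-]; apply/bigcupP; exists (sigp k x).
    by rewrite inE; apply/asboolP; exists x.
  apply/imsetP; exists (Sl k x); first by rewrite inE; apply/asboolP; exists x.
  apply/ffunP => l; rewrite !ffunE; case: (eqVneq l kk) => [->|lk] /=; first by rewrite ltnSn.
  have : (val l != k) by move: lk; apply: contra => /eqP e; apply/eqP/val_inj.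
  by rewrite ltnS leq_eqVlt => /negbTE ->.
apply: leq_trans (subset_leq_card sub) _; apply: leq_trans (card_bigcup_le _ _) _.
apply: (@leq_trans (\sum_(s in Aset k) Bs)).
  apply: leq_sum => s _; apply: leq_trans (leq_imset_card _ _) _; exact: Tk_card.
rewrite sum_nat_const expnSr; apply: leq_mul (IH (ltnW hk)) (leqnn _).
Qed.

End Net.

End Aux.
Import Aux.


Lemma binom_bound (R : realType) (N k : nat) : (0 < k)%N -> (k <= N)%N ->
  ((\sum_(i < k.+1) 'C(N, i))%:R : R) <= (expR 1 * N%:R / k%:R) ^+ k.
Proof.
move=> k0 kN.
have N0 : (0 : R) < N%:R by rewrite ltr0n; apply: leq_trans kN.
have k0' : (0 : R) < k%:R by rewrite ltr0n.
pose t : R := k%:R / N%:R.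
have t0 : 0 < t by rewrite divr_gt0.
have t1 : t <= 1 by rewrite ler_pdivrMr // mul1r ler_nat.
have step1 : (\sum_(i < k.+1) 'C(N, i))%:R * t ^+ k <= \sum_(i < k.+1) 'C(N,i)%:R * t ^+ i.
  rewrite natr_sum mulr_suml; apply: ler_sum => i _; apply: ler_wpM2l; first exact: ler0n.
  by apply: (ler_wiXn2l (ltW t0) t1); rewrite -ltnS.
have step2 : \sum_(i < k.+1) 'C(N,i)%:R * t ^+ i <= (t + 1) ^+ N.
  rewrite exprD1n (big_ord_widen N.+1 (fun i => 'C(N,i)%:R * t ^+ i)) ?ltnS //.
  rewrite [X in _ <= X](bigID (fun i : 'I_N.+1 => (i < k.+1)%N)) /=.
  under [X in _ <= X + _]eq_bigr do rewrite -mulr_natl.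
  rewrite lerDl; apply: sumr_ge0 => i _; by rewrite mulrn_wge0 // exprn_ge0 // ltW.
have step3 : (t + 1) ^+ N <= expR 1 ^+ k.
  apply: (@le_trans _ _ (expR t ^+ N)).
    have tp : 0 <= t + 1 by rewrite addr_ge0 // ltW.
    apply: lerXn2r; rewrite ?nnegrE ?expR_ge0 //.
    rewrite addrC; exact: expR_ge1Dx.
  rewrite -expRM_natr /t divfK ?gt_eqF //.
  by rewrite -expRM_natl mulr1.
have : (\sum_(i < k.+1) 'C(N, i))%:R * t ^+ k <= expR 1 ^+ k.
  exact: le_trans step1 (le_trans step2 step3).
rewrite -ler_pdivlMr ?exprn_gt0 // => h; apply: le_trans h _.
by rewrite -expr_div_n /t invf_div mulrA.
Qed.

Local Open Scope classical_set_scope.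
Local Open Scope fset_scope.

Theorem lemma5p7 (R : realType) (d N L : nat) (hdN : (d + 2 < N)%N)
  (W0 : 'M[R]_(N, d)) (W : nat -> 'M[R]_N) (b : nat -> 'cV[R]_N) :
  finite_set (@patterns R d N L W0 W b) /\
  (#|` fset_set (@patterns R d N L W0 W b) |%:R : R)
    <= (expR 1 * N%:R / (d.+1)%:R) ^+ (L * d.+1).
Proof.
pose g (s : {ffun 'I_L -> {set 'I_N}}) : {ffun 'I_L -> 'M[R]_N} := [ffun l => Dm R (s l)].
have pat : forall x, pattern L W0 W b x = g (sigp L W0 W b L x).
  move=> x; apply/ffunP => l; rewrite !ffunE ltn_ord /Delta /Dm; congr diag_mx.
  by apply/rowP => i; rewrite !mxE inE.
pose X := [set s | s \in Aset L W0 W b L].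
have E : patterns W0 W b = (g @` X)%classic.
  apply/seteqP; split => P.
    case=> x _ <-; exists (sigp L W0 W b L x); last by rewrite pat.
    by rewrite /X /= /Aset inE; apply/asboolP; exists x.
  case=> s; rewrite /X /= /Aset inE => /asboolP [x <-] <-; exists x => //; by rewrite pat.
have finX : finite_set X := finite_finset.
split; first by rewrite E; apply: finite_image.
rewrite E fset_set_image //.
have cX : #|` fset_set X| = #|Aset L W0 W b L|.
  rewrite -card_finset; congr (#|` _|); apply/fsetP => s.
  rewrite in_fset_set // /X; apply/idP/idP => [/set_mem /= h | h].
    by move: h; rewrite /Aset !inE.
  by apply: mem_set => /=; move: h; rewrite /Aset !inE.
have c1 : (#|` [fset g x | x in fset_set X]| <= #|Aset L W0 W b L|)%N.
  by rewrite -cX; exact: leq_imfset_card.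
have c2 := Aset_card W0 W b (leqnn L).
apply: (@le_trans _ _ ((Bs d N ^ L)%:R)); first by rewrite ler_nat; exact: leq_trans c1 c2.
have kN : (d.+1 <= N)%N by apply: (leq_trans _ (ltnW hdN)); rewrite addn2 leqnSn.
have h0 : (0 : R) <= expR 1 * N%:R / (d.+1)%:R by rewrite divr_ge0 // mulr_ge0 // expR_ge0.
rewrite natrX mulnC exprM; apply: lerXn2r; rewrite ?nnegrE ?ler0n ?exprn_ge0 //.
exact: binom_bound.
Qed.
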